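(* For integers $r\le s<0$, the universal algebraic prolongation of $\mathbb K\delta_{rs}$ in $\mathfrak{gl}(V_{rs})$ is isomorphic to $\mathfrak{gl}_2$; its largest ideal contained in the nonnegative-degree part is $\mathbb K\,\mathrm{Id}$.
   Context: $V_{rs}=\bigoplus_{i=r}^sE_i$ with $\dim E_i=1$ in degree $i$; $\delta_{rs}$ maps $E_i$ onto $E_{i-1}$ for $r<i\le s$ and $E_r$ to $0$. $\mathfrak{gl}(V_{rs})$ is graded by $\mathfrak{gl}(V)_k=\bigoplus_i\operatorname{Hom}(E_i,E_{i+k})$. Universal algebraic prolongation of a line $\mathfrak m\subset\mathfrak g_{-1}$: $\mathfrak u_{-1}=\mathfrak m$, $\mathfrak u_k=\{X\in\mathfrak g_k:[X,\delta]\in\mathfrak u_{k-1}\ \forall\delta\in\mathfrak m\}$ ($k\ge0$), $\mathfrak u(\mathfrak m)=\bigoplus_{k\ge-1}\mathfrak u_k$. *)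

(* Defs.v *)
From HB Require Import structures.
From mathcomp Require Import all_boot all_order all_algebra.
Set Implicit Arguments. Unset Strict Implicit. Unset Printing Implicit Defensive.
Import Order.TTheory GRing.Theory Num.Theory.
Local Open Scope ring_scope.

(* V_{rs} = E_r + ... + E_s, dim E_i = 1.  We take n := |s - r| and index the
   basis vectors e_0 .. e_n by 'I_n.+1; basis vector e_a spans E_{r+a}.
   Endomorphisms are matrices acting on column vectors: X e_b = sum_a X a b e_a. *)
Definition dimV (r s : int) : nat := `|s - r|%N.

Definition Vdeg (r : int) (n : nat) (a : 'I_n) : int := r + (a : nat)%:Z.

Definition glM (K : fieldType) (r s : int) := 'M[K]_((dimV r s).+1).

Definition lbr (K : fieldType) (m : nat) (X Y : 'M[K]_m) : 'M[K]_m :=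
  X *m Y - Y *m X.

(* delta_{rs}: e_b |-> e_{b-1} (E_i onto E_{i-1}), e_0 |-> 0 (E_r to 0). *)
Definition delta_rs (K : fieldType) (r s : int) : glM K r s :=
  \matrix_(a, b) (((a : nat).+1 == (b : nat))%:R).

(* degree-k homogeneous component of X in gl(V) = sum_i Hom(E_i, E_{i+k}) *)
Definition gcomp (K : fieldType) (r s : int) (k : int) (X : glM K r s)
  : glM K r s :=
  \matrix_(a, b) (if Vdeg r a == Vdeg r b + k then X a b else 0).

Definition ghom (K : fieldType) (r s : int) (k : int) (X : glM K r s) : Prop :=
  forall a b, Vdeg r a != Vdeg r b + k -> X a b = 0.

Definition mline (K : fieldType) (r s : int) (X : glM K r s) : Prop :=
  exists c : K, X = c *: delta_rs K r s.

Fixpoint upos (K : fieldType) (r s : int) (k : nat) (X : glM K r s) : Prop :=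
  match k with
  | 0%N => ghom 0 X /\ forall D, mline D -> mline (lbr X D)
  | k'.+1 => ghom (k'.+1)%:Z X /\ forall D, mline D -> upos k' (lbr X D)
  end.

(* u_k for all integers k: u_{-1} = m, u_k = 0 for k < -1 *)
Definition uk (K : fieldType) (r s : int) (k : int) (X : glM K r s) : Prop :=
  match k with
  | Posz k' => upos k' X
  | Negz 0 => mline X
  | Negz _.+1 => X = 0
  end.

Definition inU (K : fieldType) (r s : int) (X : glM K r s) : Prop :=
  forall k : int, uk k (gcomp k X).

Definition inUnonneg (K : fieldType) (r s : int) (X : glM K r s) : Prop :=
  inU X /\ forall k : int, k < 0 -> gcomp k X = 0.

Definition is_u_ideal (K : fieldType) (r s : int) (I : glM K r s -> Prop) : Prop :=
  [/\ forall X, I X -> inU X,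
      I 0,
      forall (c : K) X Y, I X -> I Y -> I (c *: X + Y)
    & forall X Y, inU X -> I Y -> I (lbr X Y)].

Definition scalarsId (K : fieldType) (r s : int) (X : glM K r s) : Prop :=
  exists c : K, X = c%:M.

(* Main.v *)
Require Import Defs.
From HB Require Import structures.
From mathcomp Require Import all_boot all_order all_algebra.
From mathcomp Require Import zify ring lra.
Import Order.TTheory GRing.Theory Num.Theory.
Local Open Scope ring_scope.
Set Implicit Arguments. Unset Strict Implicit. Unset Printing Implicit Defensive.


Ltac kill_false := repeat match goal with
  |- context [?x == ?y :> nat] => rewrite (_ : (x == y) = false); last by lia end.

Definition nf (K : fieldType) n (Y : 'M[K]_n.+1) (i j : nat) : K :=
  if ((i < n.+1) && (j < n.+1))%N then Y (inord i) (inord j) else 0.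

Definition dgf (K : fieldType) (n : nat) (p q : K) (i : nat) : K :=
  p * i%:R + q * (n%:R - i%:R).
Definition ubf (K : fieldType) (n : nat) (b : K) (j : nat) : K :=
  b * j.+1%:R * (n%:R - j%:R).

Definition fmf (K : fieldType) (n : nat) (p q b g : K) (i j : nat) : K :=
  if i == j then dgf n p q i else if i == j.+1 then ubf n b j
  else if i.+1 == j then g else 0.

Definition fm (K : fieldType) (n : nat) (p q b g : K) : 'M[K]_n.+1 :=
  \matrix_(i, j) fmf n p q b g i j.

Lemma nf_ord (K : fieldType) n (Y : 'M[K]_n.+1) (i j : 'I_n.+1) : nf Y i j = Y i j.
Proof. by rewrite /nf !ltn_ord !inord_val. Qed.

Lemma nf_fm (K : fieldType) n (p q b g : K) i j :
  nf (fm n p q b g) i j = if ((i < n.+1) && (j < n.+1))%N then fmf n p q b g i j else 0.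
Proof.
rewrite /nf; case: ifP => // /andP[hi hj]; by rewrite mxE !inordK.
Qed.

Lemma sum_pick (K : fieldType) N (k : nat) (H : nat -> K) :
  \sum_(c < N) ((c : nat) == k)%:R * H c = (k < N)%:R * H k.
Proof.
elim: N => [|N IH]; first by rewrite big_ord0 ltn0 mul0r.
rewrite big_ord_recr /= IH.
case: (ltngtP k N) => h /=.
- by rewrite (_ : (k < N.+1)%N = true) ?mul1r ?mul0r ?addr0 //; lia.
- by rewrite (_ : (k < N.+1)%N = false) ?mul1r ?mul0r ?addr0 //; lia.
- by rewrite h ltnSn mul0r add0r.
Qed.

Lemma sum_pickS (K : fieldType) N (k : nat) (H : nat -> K) :
  \sum_(c < N) (k == (c : nat).+1)%:R * H c =
  if k is k'.+1 then (k' < N)%:R * H k' else 0.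
Proof.
case: k => [|k]; first by rewrite big1 // => c _; rewrite mul0r.
rewrite -sum_pick; apply: eq_bigr => c _; by rewrite eqSS eq_sym.
Qed.

Lemma fmf_ind (K : fieldType) n (p q b g : K) i c :
  fmf n p q b g i c = (c == i)%:R * dgf n p q i + (i == c.+1)%:R * ubf n b c
     + (c == i.+1)%:R * g.
Proof.
rewrite /fmf.
case: (eqVneq i c) => [<-|h1]; first by kill_false; rewrite ?eqxx /=; ring.
case: (eqVneq i c.+1) => [->|h2]; first by kill_false; rewrite ?eqxx /=; ring.
case: (eqVneq i.+1 c) => [<-|h3]; first by kill_false; rewrite ?eqxx /=; ring.
by kill_false => /=; ring.
Qed.

Lemma mul_fm_l (K : fieldType) n (p q b g : K) (Y : 'M[K]_n.+1) (i j : 'I_n.+1) :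
  (fm n p q b g *m Y) i j =
  dgf n p q i * nf Y i j
  + (if (i : nat) is i'.+1 then ubf n b i' * nf Y i' j else 0)
  + g * nf Y i.+1 j.
Proof.
rewrite mxE.
under eq_bigr => c _ do rewrite mxE fmf_ind -(nf_ord Y) !mulrDl.
rewrite !big_split /=.
rewrite (eq_bigr (fun c : 'I_n.+1 => ((c:nat) == i)%:R * (dgf n p q i * nf Y i j))); last first.
  by move=> c _; case: eqP => [->|_]; rewrite ?mul0r ?mul1r.
rewrite (sum_pick _ _ (fun _ => dgf n p q i * nf Y i j)) ltn_ord mul1r.
rewrite (eq_bigr (fun c : 'I_n.+1 => ((i:nat) == c.+1)%:R * (ubf n b c * nf Y c j))); last first.
  by move=> c _; rewrite mulrA.
rewrite (sum_pickS _ _ (fun c => ubf n b c * nf Y c j)).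
rewrite (eq_bigr (fun c : 'I_n.+1 => ((c:nat) == i.+1)%:R * (g * nf Y c j))); last first.
  by move=> c _; rewrite mulrA.
rewrite (sum_pick _ _ (fun c => g * nf Y c j)).
have -> : (i.+1 < n.+1)%:R * (g * nf Y i.+1 j) = g * nf Y i.+1 j.
  by rewrite /nf; case: ltnP => h //=; rewrite ?mul1r // mul0r mulr0.
case: (nat_of_ord i) (ltn_ord i) => [|i'] hi //=.
by rewrite (_ : (i' < n.+1)%N) ?mul1r //; lia.
Qed.

Lemma fmf_ind2 (K : fieldType) n (p q b g : K) c j :
  fmf n p q b g c j = (c == j)%:R * dgf n p q j + (c == j.+1)%:R * ubf n b j
     + (j == c.+1)%:R * g.
Proof.
rewrite /fmf.
case: (eqVneq c j) => [<-|h1]; first by kill_false; rewrite ?eqxx /=; ring.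
case: (eqVneq c j.+1) => [->|h2]; first by kill_false; rewrite ?eqxx /=; ring.
case: (eqVneq c.+1 j) => [<-|h3]; first by kill_false; rewrite ?eqxx /=; ring.
by kill_false => /=; ring.
Qed.

Lemma mul_fm_r (K : fieldType) n (p q b g : K) (Y : 'M[K]_n.+1) (i j : 'I_n.+1) :
  (Y *m fm n p q b g) i j =
  nf Y i j * dgf n p q j + nf Y i j.+1 * ubf n b j
  + (if (j : nat) is j'.+1 then nf Y i j' * g else 0).
Proof.
rewrite mxE.
under eq_bigr => c _ do rewrite mxE fmf_ind2 -(nf_ord Y) mulrDr mulrDr.
rewrite !big_split /=.
rewrite (eq_bigr (fun c : 'I_n.+1 => ((c:nat) == j)%:R * (nf Y i j * dgf n p q j))); last first.
  by move=> c _; case: eqP => [->|_]; rewrite ?mul0r ?mul1r ?mulr0 ?mulr1.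
rewrite (sum_pick _ _ (fun _ => nf Y i j * dgf n p q j)) ltn_ord mul1r.
rewrite (eq_bigr (fun c : 'I_n.+1 => ((c:nat) == j.+1)%:R * (nf Y i c * ubf n b j))); last first.
  by move=> c _; rewrite mulrCA.
rewrite (sum_pick _ _ (fun c => nf Y i c * ubf n b j)).
rewrite (eq_bigr (fun c : 'I_n.+1 => ((j:nat) == c.+1)%:R * (nf Y i c * g))); last first.
  by move=> c _; rewrite mulrCA.
rewrite (sum_pickS _ _ (fun c => nf Y i c * g)).
have -> : (j.+1 < n.+1)%:R * (nf Y i j.+1 * ubf n b j) = nf Y i j.+1 * ubf n b j.
  rewrite /nf ltn_ord /=; case: (j.+1 < n.+1)%N => /=; by rewrite ?mul1r ?mul0r.
case: (nat_of_ord j) (ltn_ord j) => [|j'] hj //=.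
by rewrite (_ : (j' < n.+1)%N) ?mul1r //; lia.
Qed.

Ltac crunch := repeat (match goal with |- context [if ?c then _ else _] => case: ifP => ? end).
Ltac kill_true := repeat match goal with
  |- context [?x == ?y :> nat] => rewrite (_ : (x == y) = true); last by lia end.
Ltac kill_lt := repeat match goal with
  |- context [(?x < ?y)%N] => first [rewrite (_ : (x < y)%N = true); last by lia
                                 | rewrite (_ : (x < y)%N = false); last by lia] end.
Ltac substeq := repeat match goal with
  | H : (?x == ?y) = true |- _ => move/eqP: H => H; subst
  | H : (?y.+1 < ?n.+1)%N = false |- _ =>
      let E := fresh in have E : n = y by lia; subst n; clear H
  end.
Ltac fin := first [ by exfalso; lia | substeq; ring ].

Lemma lbr_fm (K : fieldType) n (p q b g p' q' b' g' : K) :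
  lbr (fm n p q b g) (fm n p' q' b' g') =
  fm n (b * g' - b' * g) (g * b' - g' * b) (p * b' + b * q' - p' * b - b' * q)
    (g * p' + q * g' - g' * p - q' * g).
Proof.
apply/matrixP => i j.
rewrite /lbr.
have -> : forall (A B : 'M[K]_n.+1), (A - B) i j = A i j - B i j by move=> A B; rewrite !mxE.
rewrite mul_fm_l mul_fm_r !nf_fm [in RHS]mxE.
move: (ltn_ord i) (ltn_ord j); move: (nat_of_ord i) (nat_of_ord j) => a c ha hc; clear i j.
have H7 : c = a \/ c = a.+1 \/ a = c.+1 \/ c = a.+2 \/ a = c.+2 \/ (a.+2 < c)%N \/ (c.+2 < a)%N by lia.
case: H7 => [E|[E|[E|[E|[E|[E|E]]]]]];
  [ subst c; case: a ha hc => [|a] ha hc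
  | subst c; case: a ha hc => [|a] ha hc
  | subst a; case: c ha hc => [|c] ha hc
  | subst c; case: a ha hc => [|a] ha hc
  | subst a; case: c ha hc => [|c] ha hc
  | case: a ha hc E => [|a] ha hc E; case: c ha hc E => [|c] ha hc E
  | case: a ha hc E => [|a] ha hc E; case: c ha hc E => [|c] ha hc E ].
all: rewrite ?nf_fm /fmf /dgf /ubf /=.
all: kill_false; kill_true; kill_lt; rewrite /=; crunch.
all: try (by exfalso; lia).
all: try ring.
all: match goal with H : (?y.+1 < ?m.+1)%N = false |- _ => have E : m = y by lia end; rewrite E; ring.
Qed.


Lemma fm_scale (K : fieldType) n (c p q b g : K) :
  c *: fm n p q b g = fm n (c * p) (c * q) (c * b) (c * g).
Proof.
apply/matrixP => i j; rewrite !mxE /fmf /dgf /ubf.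
by crunch; ring.
Qed.

Lemma fm_add (K : fieldType) n (p q b g p' q' b' g' : K) :
  fm n p q b g + fm n p' q' b' g' = fm n (p + p') (q + q') (b + b') (g + g').
Proof.
apply/matrixP => i j; rewrite !mxE /fmf /dgf /ubf.
by crunch; ring.
Qed.

Lemma fm0 (K : fieldType) n : fm n 0 0 0 0 = 0 :> 'M[K]_n.+1.
Proof.
apply/matrixP => i j; rewrite !mxE /fmf /dgf /ubf.
by crunch; ring.
Qed.

Lemma nf_outl (K : fieldType) n (Y : 'M[K]_n.+1) i j : (n < i)%N -> nf Y i j = 0.
Proof. by move=> h; rewrite /nf (_ : (i < n.+1)%N = false) //; lia. Qed.
Lemma nf_outr (K : fieldType) n (Y : 'M[K]_n.+1) i j : (n < j)%N -> nf Y i j = 0.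
Proof. by move=> h; rewrite /nf (_ : (j < n.+1)%N = false) ?andbF //; lia. Qed.

Lemma nf_eq (K : fieldType) n (A B : 'M[K]_n.+1) :
  (forall i j, (i < n.+1)%N -> (j < n.+1)%N -> nf A i j = nf B i j) -> A = B.
Proof.
move=> h; apply/matrixP => i j; by rewrite -!nf_ord h.
Qed.

Lemma nf_scale (K : fieldType) n (c : K) (Y : 'M[K]_n.+1) i j : nf (c *: Y) i j = c * nf Y i j.
Proof. by rewrite /nf; case: ifP; rewrite ?mxE ?mulr0. Qed.

Lemma lbr_delta_nf (K : fieldType) n (Y : 'M[K]_n.+1) i j :
  (i < n.+1)%N -> (j < n.+1)%N ->
  nf (lbr Y (fm n 0 0 0 1)) i j = (if j is j'.+1 then nf Y i j' else 0) - nf Y i.+1 j.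
Proof.
move=> hi hj.
rewrite {1}/nf hi hj /= /lbr.
have -> : forall (A B : 'M[K]_n.+1) (u v : 'I_n.+1), (A - B) u v = A u v - B u v
  by move=> A B u v; rewrite !mxE.
rewrite mul_fm_l mul_fm_r !inordK // /dgf /ubf.
case: j hj => [|j] hj /=; case: i hi => [|i] hi /=; ring.
Qed.

Lemma Vdeg_eqE (r : int) n (a b : 'I_n) (k : int) :
  (Vdeg r a == Vdeg r b + k) = ((a : nat)%:Z == (b : nat)%:Z + k).
Proof. rewrite /Vdeg -addrA; apply/eqP/eqP => [/addrI|->] //. Qed.

Lemma gcomp_nf (K : fieldType) (r s : int) (k : int) (X : glM K r s) i j :
  nf (gcomp k X) i j = if (i%:Z == j%:Z + k) then nf X i j else 0.
Proof.
rewrite /nf; case: ifP => h; last by case: ifP.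
by rewrite mxE Vdeg_eqE !inordK //; case/andP: h.
Qed.

Lemma ghom_nf (K : fieldType) (r s : int) (k : int) (X : glM K r s) i j :
  ghom k X -> (i%:Z != j%:Z + k) -> nf X i j = 0.
Proof.
move=> hX hne; rewrite /nf; case: ifP => // /andP[hi hj].
by apply: hX; rewrite Vdeg_eqE !inordK.
Qed.

Lemma delta_fm (K : fieldType) (r s : int) :
  delta_rs K r s = fm (dimV r s) 0 0 0 1.
Proof.
apply/matrixP => i j; rewrite !mxE /fmf /dgf /ubf.
by crunch; kill_false; rewrite ?eqxx /=; try ring; exfalso; lia.
Qed.

Ltac gc_tac := apply: nf_eq => ? ? + +; rewrite gcomp_nf !nf_fm => -> -> /=; rewrite /fmf /dgf /ubf;
  crunch; first [ring | exfalso; lia].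

Lemma gcomp_fm0 (K : fieldType) (r s : int) (p q b g : K) :
  gcomp 0 (fm (dimV r s) p q b g : glM K r s) = fm (dimV r s) p q 0 0.
Proof. gc_tac. Qed.
Lemma gcomp_fm1 (K : fieldType) (r s : int) (p q b g : K) :
  gcomp 1 (fm (dimV r s) p q b g : glM K r s) = fm (dimV r s) 0 0 b 0.
Proof. gc_tac. Qed.
Lemma gcomp_fmm1 (K : fieldType) (r s : int) (p q b g : K) :
  gcomp (Negz 0) (fm (dimV r s) p q b g : glM K r s) = fm (dimV r s) 0 0 0 g.
Proof. gc_tac. Qed.
Lemma gcomp_fmp2 (K : fieldType) (r s : int) (p q b g : K) m :
  gcomp (Posz m.+2) (fm (dimV r s) p q b g : glM K r s) = fm (dimV r s) 0 0 0 0.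
Proof. gc_tac. Qed.
Lemma gcomp_fmm2 (K : fieldType) (r s : int) (p q b g : K) m :
  gcomp (Negz m.+1) (fm (dimV r s) p q b g : glM K r s) = fm (dimV r s) 0 0 0 0.
Proof. gc_tac. Qed.

Lemma lbr0l (K : fieldType) n (D : 'M[K]_n) : lbr 0 D = 0.
Proof. by rewrite /lbr mul0mx mulmx0 subrr. Qed.

Lemma mline_fm (K : fieldType) (r s : int) (D : glM K r s) :
  mline D -> exists c, D = fm (dimV r s) 0 0 0 c.
Proof.
case=> c ->; exists c; rewrite delta_fm fm_scale; congr fm; ring.
Qed.

Lemma mline_fm' (K : fieldType) (r s : int) (p q b c : K) :
  p = 0 -> q = 0 -> b = 0 -> mline (fm (dimV r s) p q b c : glM K r s).
Proof.
move=> -> -> ->; exists c; rewrite delta_fm fm_scale; congr fm; ring.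
Qed.

Lemma upos_zero (K : fieldType) (r s : int) k : upos k (0 : glM K r s).
Proof.
elim: k => [|k IH] /=; split.
- by move=> a b _; rewrite mxE.
- move=> D _; rewrite lbr0l; exists 0; by rewrite scale0r.
- by move=> a b _; rewrite mxE.
- by move=> D _; rewrite lbr0l.
Qed.

Lemma upos0_fm (K : fieldType) (r s : int) (p q b g : K) :
  b = 0 -> g = 0 -> upos 0 (fm (dimV r s) p q b g : glM K r s).
Proof.
move=> -> -> /=; split.
- move=> a c; rewrite Vdeg_eqE mxE /fmf /dgf /ubf => h.
  by crunch; first [ring | exfalso; lia].
- move=> D /mline_fm [c ->]; rewrite lbr_fm; apply: mline_fm'; ring.
Qed.

Lemma upos1_fm (K : fieldType) (r s : int) (p q b g : K) :
  p = 0 -> q = 0 -> g = 0 -> upos 1 (fm (dimV r s) p q b g : glM K r s).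
Proof.
move=> -> -> -> /=; split.
- move=> a c; rewrite Vdeg_eqE mxE /fmf /dgf /ubf => h.
  by crunch; first [ring | exfalso; lia].
- move=> D /mline_fm [c ->]; rewrite lbr_fm; apply: upos0_fm; ring.
Qed.

Lemma inU_fm (K : fieldType) (r s : int) (p q b g : K) :
  inU (fm (dimV r s) p q b g : glM K r s).
Proof.
case=> [[|[|m]]|[|m]] /=.
- by rewrite gcomp_fm0; apply: upos0_fm.
- by rewrite gcomp_fm1; apply: upos1_fm.
- by rewrite gcomp_fmp2 fm0; exact: (upos_zero K r s m.+2).
- by rewrite gcomp_fmm1; apply: mline_fm'.
- by rewrite gcomp_fmm2 fm0.
Qed.

Lemma natr_neq0 (K : fieldType) (hK : [pchar K] =i pred0) m :
  (0 < m)%N -> (m%:R : K) != 0.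
Proof. by move=> h; rewrite ((pcharf0P K).1 hK) -lt0n. Qed.

Lemma dimV_gt0 (r s : int) : r < s -> (0 < dimV r s)%N.
Proof. rewrite /dimV => h; lia. Qed.

Lemma eq_from (K : comNzRingType) (u v w z : K) : w = z -> u - v = w - z -> u = v.
Proof. by move=> -> /eqP; rewrite subrr subr_eq0 => /eqP. Qed.

Ltac solve_with e := first [apply: (eq_from e); ring | apply: (eq_from (esym e)); ring].

Lemma arith0 (K : fieldType) (N : nat) (x : nat -> K) (c0 : K) :
  (forall a, (a < N)%N -> x a - x a.+1 = c0) ->
  forall a, (a <= N)%N -> x a = x 0%N - a%:R * c0.
Proof.
move=> h; elim=> [|a IH] ha; first by ring.
have e := h a ha; rewrite IH in e; last by lia.
solve_with e.
Qed.

Lemma arith1 (K : fieldType) (N : nat) (y : nat -> K) (c1 : K) :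
  (N.+1%:R : K) != 0 -> (2%:R : K) != 0 -> y N = 0 ->
  (forall a, (a < N)%N ->
     ((if a is a'.+1 then y a' else 0) - y a) - (y a - y a.+1) = c1) ->
  forall b, (b <= N)%N -> y b = (- c1 / 2%:R) * b.+1%:R * (N%:R - b%:R).
Proof.
move=> hN1 h2 hyN h.
pose d a := (if a is a'.+1 then y a' else 0) - y a.
have hd : forall a, (a <= N)%N -> d a = d 0%N - a%:R * c1.
  apply: arith0 => a ha; exact: h a ha.
have hy : forall a, (a <= N)%N -> 2%:R * y a = - 2%:R * a.+1%:R * d 0%N + c1 * a%:R * a.+1%:R.
  elim=> [|a IH] ha; first by rewrite /d; ring.
  have e1 := hd a.+1 ha.
  have e2 : d a.+1 = y a - y a.+1 by [].
  have -> : y a.+1 = y a - d a.+1 by rewrite e2; ring.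
  rewrite mulrBr IH; last by lia.
  rewrite e1; ring.
have h0 : 2%:R * d 0%N = c1 * N%:R.
  have := hy N (leqnn N); rewrite hyN mulr0 => e.
  have e' : N.+1%:R * (2%:R * d 0%N - c1 * N%:R) = 0 by solve_with e.
  move/eqP: e'; rewrite mulf_eq0 (negbTE hN1) /= subr_eq0 => /eqP //.
move=> b hb.
apply: (mulfI h2); rewrite hy // -mulrA -mulrA -mulrA.
have -> : - 2%:R * (b.+1%:R * d 0%N) = - (b.+1%:R * (2%:R * d 0%N)) :> K by ring.
rewrite h0; field; exact: h2.
Qed.

Lemma mline_delta (K : fieldType) (r s : int) :
  mline (fm (dimV r s) 0 0 0 1 : glM K r s).
Proof. exact: mline_fm'. Qed.

Lemma upos0_form (K : fieldType) (r s : int) (hK : [pchar K] =i pred0)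
  (hN : (0 < dimV r s)%N) (Z : glM K r s) :
  upos 0 Z -> exists p q, Z = fm (dimV r s) p q 0 0.
Proof.
case=> hZ hD.
have [c0 hc] := mline_fm (hD _ (mline_delta K r s)).
set N := dimV r s in hN hc *.
pose x a := nf Z a a.
have hrel : forall a, (a < N)%N -> x a - x a.+1 = c0.
  move=> a ha; have := congr1 (fun M => nf M a a.+1) hc.
  rewrite lbr_delta_nf; try lia.
  rewrite nf_fm /fmf (_ : (a < N.+1)%N) ?ltnS //; last by lia.
  by kill_false; rewrite ?eqxx /= ha.
have hx := arith0 hrel.
have hN0 : (N%:R : K) != 0 by apply: natr_neq0.
exists ((x 0%N - N%:R * c0) / N%:R), (x 0%N / N%:R).
apply: nf_eq => i j hi hj.
rewrite nf_fm hi hj /= /fmf /dgf /ubf.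
case: (eqVneq i j) => [<-|ne].
  rewrite -/(x i) hx; last by lia.
  field; exact: hN0.
rewrite (ghom_nf hZ); last by lia.
by crunch; ring.
Qed.

Lemma upos1_form (K : fieldType) (r s : int) (hK : [pchar K] =i pred0)
  (hN : (0 < dimV r s)%N) (Z : glM K r s) :
  upos 1 Z -> exists b, Z = fm (dimV r s) 0 0 b 0.
Proof.
case=> hZ hD.
case: (hD _ (mline_delta K r s)) => hY hY'.
have [c1 hc] := mline_fm (hY' _ (mline_delta K r s)).
set N := dimV r s in hN hc hY hY' *.
set Y := lbr Z _ in hc hY hY'.
pose y b := nf Z b.+1 b.
have hd : forall a, (a < N.+1)%N ->
    nf Y a a = (if a is a'.+1 then y a' else 0) - y a.
  move=> a ha; rewrite /Y lbr_delta_nf //.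
  by case: a ha.
have hrel : forall a, (a < N)%N ->
    ((if a is a'.+1 then y a' else 0) - y a) - (y a - y a.+1) = c1.
  move=> a ha; have := congr1 (fun M => nf M a a.+1) hc.
  rewrite lbr_delta_nf; try lia.
  rewrite hd; last by lia.
  rewrite hd; last by lia.
  rewrite nf_fm /fmf (_ : (a < N.+1)%N) ?ltnS //; last by lia.
  by kill_false; rewrite ?eqxx /= ha.
have hyN : y N = 0 by rewrite /y nf_outl.
have hy := arith1 (natr_neq0 hK (ltn0Sn N)) (natr_neq0 hK (isT : (0 < 2)%N)) hyN hrel.
exists (- c1 / 2%:R).
apply: nf_eq => i j hi hj.
rewrite nf_fm hi hj /= /fmf /dgf /ubf.
case: (eqVneq i j.+1) => [eij|ne].
  subst i; kill_false; rewrite ?eqxx /=.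
  by rewrite -/(y j) hy //; lia.
rewrite (ghom_nf hZ); last by lia.
by crunch; ring.
Qed.

Lemma tele (K : fieldType) (N : nat) (be : K) (z : nat -> K) :
  (forall b, (b < N)%N -> (if b is b'.+1 then z b' else 0) - z b = ubf N be b) ->
  forall b, (b < N)%N -> z b = - be * (\sum_(j < b.+1) (j.+1 * (N - j)))%:R.
Proof.
move=> h; elim=> [|b IH] hb.
  have e := h 0%N hb; rewrite big_ord1 /= /ubf in e *.
  rewrite mul1n natrB; last by lia.
  solve_with e.
have e := h b.+1 hb; rewrite IH /ubf in e; last by lia.
rewrite big_ord_recr /= natrD natrM natrB; last by lia.
solve_with e.
Qed.

Lemma sum_pos (N : nat) : (0 < N)%N -> (0 < \sum_(j < N) (j.+1 * (N - j)))%N.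
Proof.
case: N => [|N] // _; rewrite big_ord_recl /=.
rewrite mul1n subn0; lia.
Qed.

Lemma upos2_zero (K : fieldType) (r s : int) (hK : [pchar K] =i pred0)
  (hN : (0 < dimV r s)%N) (Z : glM K r s) :
  upos 2 Z -> Z = 0.
Proof.
case=> hZ hD.
have [be hbe] := upos1_form hK hN (hD _ (mline_delta K r s)).
pose z b := nf Z b.+2 b.
have hrel : forall b, (b < (dimV r s))%N -> (if b is b'.+1 then z b' else 0) - z b = ubf (dimV r s) be b.
  move=> b hb; have := congr1 (fun M => nf M b.+1 b) hbe.
  rewrite lbr_delta_nf //; try lia.
  rewrite nf_fm /fmf (_ : (b.+1 < (dimV r s).+1)%N); last by lia.
  kill_false; rewrite ?eqxx /= (_ : (b < (dimV r s).+1)%N) //; last by lia.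
  by case: b hb.
have hz := tele hrel.
have hzN : z (dimV r s).-1 = 0 by rewrite /z nf_outl //; lia.
have hbe0 : be = 0.
  have := hz (dimV r s).-1; rewrite hzN (_ : (dimV r s).-1.+1 = (dimV r s)); last by lia.
  move=> /(_ (ltac:(lia))) /eqP; rewrite eq_sym mulf_eq0 (negbTE (natr_neq0 hK (sum_pos hN))) orbF.
  by rewrite oppr_eq0 => /eqP.
apply: nf_eq => i j hi hj.
rewrite [RHS]/nf hi hj /= mxE.
case: (eqVneq i j.+2) => [eij|ne].
  subst i; rewrite -/(z j) hz; last by lia.
  by rewrite hbe0 oppr0 mul0r.
by rewrite (ghom_nf hZ) //; lia.
Qed.

Lemma comm_zero (K : fieldType) (r s : int) (Z : glM K r s) m :
  ghom (Posz m.+1) Z -> lbr Z (fm (dimV r s) 0 0 0 1) = 0 -> Z = 0.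
Proof.
move=> hZ hc.
have hrel : forall i j, (i < (dimV r s).+1)%N -> (j < (dimV r s))%N -> nf Z i j = nf Z i.+1 j.+1.
  move=> i j hi hj; have := congr1 (fun M => nf M i j.+1) hc.
  rewrite lbr_delta_nf; try lia.
  have -> : nf (0 : glM K r s) i j.+1 = 0 by rewrite /nf; case: ifP; rewrite ?mxE.
  by move/eqP; rewrite subr_eq0 => /eqP.
have key : forall t i j, ((dimV r s) <= i + t)%N -> nf Z i j = 0.
  elim=> [|t IH] i j hit.
  - case: (ltnP (dimV r s) i) => hi; first exact: nf_outl.
    case: (ltnP (dimV r s) j) => hj; first exact: nf_outr.
    case: (ltnP j (dimV r s)) => hj'.
      rewrite hrel; try lia.
      by rewrite nf_outl //; lia.
    by rewrite (ghom_nf hZ) //; lia.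
  - case: (ltnP (dimV r s) i) => hi; first exact: nf_outl.
    case: (ltnP (dimV r s) j) => hj; first exact: nf_outr.
    case: (ltnP j (dimV r s)) => hj'.
      rewrite hrel; try lia.
      by apply: IH; lia.
    by rewrite (ghom_nf hZ) //; lia.
apply: nf_eq => i j hi hj; rewrite (key (dimV r s)) ?leq_addl //.
by rewrite /nf hi hj mxE.
Qed.

Lemma upos_ge2 (K : fieldType) (r s : int) (hK : [pchar K] =i pred0)
  (hN : (0 < dimV r s)%N) k (Z : glM K r s) :
  upos k.+2 Z -> Z = 0.
Proof.
elim: k Z => [|k IH] Z; first exact: upos2_zero.
case=> hZ hD.
have := IH _ (hD _ (mline_delta K r s)).
exact: comm_zero hZ.
Qed.

Lemma gcomp_ext (K : fieldType) (r s : int) (X Y : glM K r s) :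
  (forall k, gcomp k X = gcomp k Y) -> X = Y.
Proof.
move=> h; apply/matrixP => i j.
have := congr1 (fun M : glM K r s => M i j) (h ((i : nat)%:Z - (j : nat)%:Z)).
by rewrite !mxE Vdeg_eqE addrC subrK eqxx.
Qed.

Lemma inU_form (K : fieldType) (r s : int) (hK : [pchar K] =i pred0)
  (hN : (0 < dimV r s)%N) (X : glM K r s) :
  inU X -> exists p q b g, X = fm (dimV r s) p q b g.
Proof.
move=> hX.
have [p [q hpq]] := upos0_form hK hN (hX 0).
have [b hb] := upos1_form hK hN (hX 1).
have [g hg] := mline_fm (hX (Negz 0)).
exists p, q, b, g; apply: gcomp_ext => -[[|[|m]]|[|m]].
- by rewrite gcomp_fm0.
- by rewrite gcomp_fm1.
- by rewrite gcomp_fmp2 fm0; apply: upos_ge2 hK hN m _ (hX (Posz m.+2)).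
- by rewrite gcomp_fmm1.
- by rewrite gcomp_fmm2 fm0; exact: (hX (Negz m.+1)).
Qed.


Lemma fm_inj (K : fieldType) (hK : [pchar K] =i pred0) n (hn : (0 < n)%N)
  (p q b g p' q' b' g' : K) :
  fm n p q b g = fm n p' q' b' g' -> [/\ p = p', q = q', b = b' & g = g'].
Proof.
move=> e.
have E i j : nf (fm n p q b g) i j = nf (fm n p' q' b' g') i j by rewrite e.
have hn0 : (n%:R : K) != 0 by apply: natr_neq0.
have e00 := E 0%N 0%N; have enn := E n n; have e10 := E 1%N 0%N; have e01 := E 0%N 1%N.
rewrite !nf_fm /fmf /dgf /ubf /= in e00 enn e10 e01.
rewrite (_ : (1 < n.+1)%N) //= in e10 e01.
rewrite ltnSn eqxx /= in enn.
split.
- apply: (mulIf hn0); solve_with enn.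
- apply: (mulIf hn0); solve_with e00.
- apply: (mulIf hn0); solve_with e10.
- exact: e01.
Qed.

Lemma scalar_fm (K : fieldType) n (c : K) : (n%:R : K) != 0 ->
  c%:M = fm n (c / n%:R) (c / n%:R) 0 0 :> 'M[K]_n.+1.
Proof.
move=> hn; apply/matrixP => i j; rewrite !mxE /fmf /dgf /ubf.
case: (eqVneq i j) => [->|ne] /=; first by rewrite eqxx mulr1n; field.
rewrite mulr0n (_ : ((i : nat) == j) = false); last exact: negbTE ne.
by crunch; ring.
Qed.

Lemma ord2_cases (i : 'I_2) : i = 0 \/ i = 1.
Proof.
case: i => [[|[|m]]] hm; [left|right|by []]; exact: val_inj.
Qed.

Lemma lbr2 (K : fieldType) (A B : 'M[K]_2) :
  lbr A B = \matrix_(i, j)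
    (if i == 0 then
       (if j == 0 then A 0 1 * B 1 0 - B 0 1 * A 1 0
        else A 0 0 * B 0 1 + A 0 1 * B 1 1 - B 0 0 * A 0 1 - B 0 1 * A 1 1)
     else
       (if j == 0 then A 1 0 * B 0 0 + A 1 1 * B 1 0 - B 1 0 * A 0 0 - B 1 1 * A 1 0
        else A 1 0 * B 0 1 - B 1 0 * A 0 1)).
Proof.
apply/matrixP => i j; rewrite /lbr !mxE !big_ord_recl !big_ord0.
rewrite (_ : lift ord0 ord0 = 1 :> 'I_2); last exact: val_inj.
rewrite (_ : ord0 = 0 :> 'I_2); last exact: val_inj.
by case: (ord2_cases i) => ->; case: (ord2_cases j) => ->; rewrite /=; ring.
Qed.

Unset Implicit Arguments.

Theorem mainTheorem12 (K : fieldType) (r s : int) :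
  [pchar K] =i pred0 -> r < s -> s < 0 ->
  (exists f : 'M[K]_2 -> glM K r s,
      [/\ forall (c : K) A B, f (c *: A + B) = c *: f A + f B,
          injective f,
          forall X : glM K r s, inU X <-> exists A, X = f A
        & forall A B, f (lbr A B) = lbr (f A) (f B)])
  /\
  [/\ is_u_ideal (@scalarsId K r s),
      (forall X : glM K r s, scalarsId X -> inUnonneg X)
    & forall I : glM K r s -> Prop,
        is_u_ideal I -> (forall X : glM K r s, I X -> inUnonneg X) ->
        forall X : glM K r s, I X -> scalarsId X].
Proof.
move=> hK hrs _.
have hN := dimV_gt0 hrs.
have hN0 : ((dimV r s)%:R : K) != 0 := natr_neq0 hK hN.
pose f := fun A : 'M[K]_2 => (fm (dimV r s) (A 0 0) (A 1 1) (A 0 1) (A 1 0) : glM K r s).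
split.
- exists f; split.
  + move=> c A B; rewrite /f fm_scale fm_add !mxE //.
  + move=> A B /(fm_inj hK hN) [e1 e2 e3 e4]; apply/matrixP => i j.
    by case: (ord2_cases i) => ->; case: (ord2_cases j) => ->.
  + move=> X; split.
    * move/(inU_form hK hN) => [p [q [b [g ->]]]].
      exists (\matrix_(i, j) (if i == 0 then (if j == 0 then p else b)
                             else (if j == 0 then g else q))).
      by rewrite /f !mxE.
    * by case=> A ->; exact: inU_fm.
  + move=> A B; rewrite /f lbr_fm lbr2 !mxE /=; congr fm; ring.
- split.
  + split.
    * by move=> X [c ->]; rewrite (scalar_fm c hN0); exact: inU_fm.
    * by exists 0; apply/matrixP => i j; rewrite !mxE mul0rn.
    * move=> c X Y [a ->] [b ->]; exists (c * a + b); apply/matrixP => i j.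
      by rewrite !mxE; case: (i == j); rewrite /= ?mulr1n ?mulr0n ?mulr0 ?addr0.
    * move=> X Y _ [a ->]; exists 0; rewrite /lbr mul_mx_scalar mul_scalar_mx subrr.
      by apply/matrixP => i j; rewrite !mxE mul0rn.
  + move=> X [c ->]; rewrite (scalar_fm c hN0); split; first exact: inU_fm.
    case=> [m|[|m]] // _; [rewrite gcomp_fmm1 | rewrite gcomp_fmm2]; exact: fm0.
  + move=> I [hIU hI0 hIl hIb] hneg X hX.
    have [p [q [b [g eX]]]] := inU_form hK hN (hIU X hX).
    have hnegg : forall Y, I Y -> forall p q b g, Y = fm (dimV r s) p q b g -> g = 0.
      move=> Y hY p' q' b' g' eY; have [_ h] := hneg Y hY.
      have := h (Negz 0) isT; rewrite eY gcomp_fmm1 -(fm0 K (dimV r s)).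
      by case/(fm_inj hK hN).
    have hg := hnegg X hX _ _ _ _ eX; subst g.
    have hd : inU (fm (dimV r s) 0 0 0 1 : glM K r s) by apply: inU_fm.
    have hX1 := hIb _ _ hd hX.
    have e1 := lbr_fm (dimV r s) 0 0 0 1 p q b 0.
    rewrite -eX in e1.
    have hpq := hnegg _ hX1 _ _ _ _ e1.
    have hX2 := hIb _ _ hd hX1.
    have e2 := lbr_fm (dimV r s) 0 0 0 1 (0 * 0 - b * 1) (1 * b - 0 * 0)
                 (0 * b + 0 * q - p * 0 - b * 0) (1 * p + 0 * 0 - 0 * 0 - q * 1).
    rewrite -e1 in e2.
    have hb := hnegg _ hX2 _ _ _ _ e2.
    have h2b : 2%:R * b = 0 by solve_with hb.
    move/eqP: h2b; rewrite mulf_eq0 (negbTE (natr_neq0 hK (isT : (0 < 2)%N))) /= => /eqP hb0.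
    have hpq' : p = q by solve_with hpq.
    subst b q; exists (p * (dimV r s)%:R); rewrite eX (scalar_fm _ hN0).
    by congr fm; field; exact: hN0.
Qed.
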